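(* Let $m\ge1$, $n\ge1$, $N>2n$, let $\Sigma_0,\dots,\Sigma_n\in\mathbb R^{m\times m}$ and let $\mathbf T_n$ be the block-Toeplitz matrix whose $(i,j)$ block ($i,j=0,\dots,n$) is $\Sigma_{i-j}$ if $i\ge j$ and $\Sigma_{j-i}^\top$ if $i<j$. Assume there exists a symmetric positive definite $mN\times mN$ matrix $\bar{\boldsymbol\Sigma}_N$ with $E_n^\top\bar{\boldsymbol\Sigma}_NE_n=\mathbf T_n$ and $\mathbf U_N^\top\bar{\boldsymbol\Sigma}_N\mathbf U_N=\bar{\boldsymbol\Sigma}_N$. Let $(\Lambda_k,\Theta_k)$, $k\ge1$, be a sequence in $\mathcal L_+$ with $\|(\Lambda_k,\Theta_k)\|\to\infty$. Then $\|A(\Lambda_k,\Theta_k)\|\to\infty$, and consequently $J(\Lambda_k,\Theta_k)\to\infty$, where $J(\Lambda,\Theta)=\operatorname{Tr}(\Lambda\mathbf T_n)-\log\det A(\Lambda,\Theta)$.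
   Context: $\mathfrak S_k$ denotes the space of real symmetric $mk\times mk$ matrices. $E_n$ is the $mN\times m(n+1)$ matrix with $N\times(n+1)$ blocks of size $m\times m$ whose $(i,i)$ blocks ($i=1,\dots,n+1$) are $I_m$ and other blocks $0$. $\mathbf U_N$ is the $mN\times mN$ block shift matrix whose $(i,i+1)$ blocks ($i=1,\dots,N-1$) and $(N,1)$ block are $I_m$, others $0$. The linear map $A:\mathfrak S_{n+1}\times\mathfrak S_N\to\mathfrak S_N$ is $A(\Lambda,\Theta)=E_n\Lambda E_n^\top+\mathbf U_N\Theta\mathbf U_N^\top-\Theta$, and $\mathcal L_+=\{(\Lambda,\Theta)\in(\ker A)^\perp:A(\Lambda,\Theta)>0\}$, orthogonality and norms being with respect to the Frobenius-type inner product $\langle(\Lambda_1,\Theta_1),(\Lambda_2,\Theta_2)\rangle=\operatorname{Tr}(\Lambda_1\Lambda_2)+\operatorname{Tr}(\Theta_1\Theta_2)$ (any norms may be used since all spaces are finite-dimensional). *)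

(* Defs.v *)
From HB Require Import structures.
From mathcomp Require Import all_boot all_order all_algebra.
From mathcomp Require Import all_classical all_reals all_analysis.
Import Order.TTheory GRing.Theory Num.Theory.
Local Open Scope ring_scope.

(* Block conventions: an index k : 'I_(m * K) of a block matrix with m x m
   blocks lies in block row k %/ m (0-based) at offset k %% m inside the block. *)

Section Defs.
Variable R : realType.

(* entry (a,b) of an m x m matrix, read with nat indices (0 if out of range) *)
Definition mxentry (m : nat) (M : 'M[R]_m) (a b : nat) : R :=
  \sum_(i < m) \sum_(j < m) ((i == a :> nat) && (j == b :> nat))%:R * M i j.

Definition Emx (m N n : nat) : 'M[R]_(m * N, m * n.+1) :=
  \matrix_(k, l) ((k : nat) == (l : nat))%:R.

(* U_N : mN x mN block shift, (i,i+1) blocks and (N,1) block equal I_m *)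
Definition Umx (m N : nat) : 'M[R]_(m * N) :=
  \matrix_(k, l) (((l %/ m)%N == ((k %/ m).+1 %% N)%N)
                  && ((k %% m)%N == (l %% m)%N))%:R.

Definition Toep (m n : nat) (Sig : nat -> 'M[R]_m) : 'M[R]_(m * n.+1) :=
  \matrix_(k, l)
    if (l %/ m <= k %/ m)%N
    then mxentry m (Sig (k %/ m - l %/ m)%N) (k %% m) (l %% m)
    else mxentry m (Sig (l %/ m - k %/ m)%N) (l %% m) (k %% m).

Definition symmx (p : nat) (M : 'M[R]_p) : Prop := M^T = M.

Definition posdef (p : nat) (M : 'M[R]_p) : Prop :=
  symmx p M /\ forall x : 'cV[R]_p, x != 0 -> 0 < (x^T *m M *m x) 0 0.

Definition Aop (m N n : nat) (L : 'M[R]_(m * n.+1)) (T : 'M[R]_(m * N)) :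
  'M[R]_(m * N) :=
  Emx m N n *m L *m (Emx m N n)^T + Umx m N *m T *m (Umx m N)^T - T.

Definition pinner (m N n : nat) (L1 : 'M[R]_(m * n.+1)) (T1 : 'M[R]_(m * N))
  L2 T2 : R := \tr (L1 *m L2) + \tr (T1 *m T2).

Definition in_kerA_perp (m N n : nat) (L : 'M[R]_(m * n.+1)) (T : 'M[R]_(m * N))
  : Prop :=
  symmx _ L /\ symmx _ T /\
  forall (L' : 'M[R]_(m * n.+1)) (T' : 'M[R]_(m * N)),
    symmx _ L' -> symmx _ T' -> Aop m N n L' T' = 0 -> pinner m N n L T L' T' = 0.

Definition Lplus (m N n : nat) (L : 'M[R]_(m * n.+1)) (T : 'M[R]_(m * N)) : Prop :=
  in_kerA_perp m N n L T /\ posdef _ (Aop m N n L T).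

Definition frob (p : nat) (M : 'M[R]_p) : R := Num.sqrt (\tr (M *m M^T)).
Definition pnorm (p q : nat) (L : 'M[R]_p) (T : 'M[R]_q) : R :=
  Num.sqrt (\tr (L *m L^T) + \tr (T *m T^T)).

Definition Jfun (m N n : nat) (Sig : nat -> 'M[R]_m)
  (L : 'M[R]_(m * n.+1)) (T : 'M[R]_(m * N)) : R :=
  \tr (L *m Toep m n Sig) - ln (\det (Aop m N n L T)).

End Defs.

(* Main.v *)
Require Import Defs.
From HB Require Import structures.
From mathcomp Require Import all_boot all_order all_algebra.
From mathcomp Require Import all_classical all_reals all_analysis.
From mathcomp Require Import ring lra fingroup perm.
Import Order.TTheory GRing.Theory Num.Theory.
Local Open Scope classical_set_scope.
Local Open Scope ring_scope.

Set Implicit Arguments.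
Unset Strict Implicit.
Unset Printing Implicit Defensive.

Section Gen.
Variable R : realType.

Definition qf p (A : 'M[R]_p) (x : 'cV[R]_p) := (x^T *m A *m x) 0 0.

Lemma AAT0 a b (A : 'M[R]_(a, b)) : A *m A^T = 0 -> A = 0.
Proof.
move=> h; apply/matrixP => i j.
have : (A *m A^T) i i = 0 by rewrite h mxE.
rewrite mxE => hs.
have hs' : \sum_(k < b) A i k ^+ 2 = 0.
  by rewrite -[RHS]hs; apply: eq_bigr => k _; rewrite mxE expr2.
have := @psumr_eq0P _ _ predT (fun k => A i k ^+ 2) (fun k _ => sqr_ge0 _) hs' j isT.
by move/eqP; rewrite sqrf_eq0 mxE => /eqP.
Qed.

Lemma qf_delta p (A : 'M[R]_p) i j :
  ((delta_mx i (0 : 'I_1) : 'cV_p)^T *m A *m (delta_mx j (0 : 'I_1) : 'cV_p)) 0 0 = A i j.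
Proof. by rewrite trmx_delta -rowE -colE !mxE. Qed.


Lemma qf_deltaM p (A : 'M[R]_p) i j :
  (delta_mx i (0 : 'I_1) : 'cV_p)^T *m A *m (delta_mx j (0 : 'I_1) : 'cV_p) = (A i j)%:M.
Proof. by rewrite [LHS]mx11_scalar qf_delta. Qed.

Lemma qf_pair p (A : 'M[R]_p) i j (s : R) :
  let u := (delta_mx i (0 : 'I_1) : 'cV_p) in
  let v := (delta_mx j (0 : 'I_1) : 'cV_p) in
  qf A (u + s *: v) = A i i + s * A i j + s * A j i + s ^+ 2 * A j j.
Proof.
rewrite /qf /= !mulmxDr -!scalemxAr [(_ + _)^T]linearD /= [(_ *: _)^T]linearZ /= !mulmxDl -!scalemxAl.
rewrite !qf_deltaM !mxE /= !mulr1n; ring.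
Qed.

Lemma tr_ge_diag p (A : 'M[R]_p) (i : 'I_p) : (forall k, 0 <= A k k) -> A i i <= \tr A.
Proof.
move=> h; rewrite /mxtrace (bigD1 i) //= lerDl; apply: sumr_ge0 => k _; exact: h.
Qed.

Lemma psd_entry p (A : 'M[R]_p) : A^T = A -> (forall x, 0 <= qf A x) ->
  forall i j, `|A i j| <= \tr A.
Proof.
move=> hs hp i j.
have hji : A j i = A i j by rewrite -{1}hs mxE.
have hd : forall k, 0 <= A k k.
  move=> k; have := hp (delta_mx k (0 : 'I_1)); by rewrite /qf qf_delta.
have h1 := hp ((delta_mx i (0 : 'I_1) : 'cV_p) + 1 *: delta_mx j 0).
have h2 := hp ((delta_mx i (0 : 'I_1) : 'cV_p) + (-1) *: delta_mx j 0).
rewrite qf_pair hji in h1; rewrite qf_pair hji in h2.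
have ti := tr_ge_diag i hd; have tj := tr_ge_diag j hd.
rewrite ler_norml; apply/andP; split; nra.
Qed.


Lemma det_bound p (A : 'M[R]_p) (t : R) : (forall i j, `|A i j| <= t) ->
  `|\det A| <= (p`!)%:R * t ^+ p.
Proof.
move=> h; rewrite /determinant.
set F := fun s : 'S_p => (-1) ^+ perm.odd_perm s * \prod_i A i (s i).
have H2 : \sum_(s : 'S_p) `|F s| <= \sum_(s : 'S_p) t ^+ p.
  apply: ler_sum => s _; rewrite /F normrM normr_sign mul1r normr_prod.
  have -> : t ^+ p = \prod_(i < p) t by rewrite prodr_const card_ord.
  by apply: ler_prod => i _; rewrite normr_ge0 h.
have H3 : \sum_(s : 'S_p) t ^+ p = (p`!)%:R * t ^+ p.
  by rewrite sumr_const card_Sn mulr_natl.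
rewrite -H3; exact: le_trans (ler_norm_sum _ _ _) H2.
Qed.


Lemma chol p (S : 'M[R]_p) : S^T = S -> (forall x, x != 0 -> 0 < qf S x) ->
  exists C : 'M[R]_p, C \in unitmx /\ S = C *m C^T.
Proof.
elim: p S => [|p IH] S Ss Sp.
  exists 1%:M; split; first exact: unitmx1.
  by apply/matrixP => [[]].
move: S Ss Sp; change p.+1 with (1 + p)%N => S Ss Sp.
set a := ulsubmx S; set b := dlsubmx S; set c := ursubmx S; set d := drsubmx S.
have eS : S = block_mx a c b d by rewrite submxK.
have : block_mx a^T b^T c^T d^T = block_mx a c b d by rewrite -tr_block_mx -eS Ss.
move=> /eq_block_mx [ha hbc hcb hd].
set s := a 0 0.
have ea : a = s%:M by rewrite [LHS]mx11_scalar.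
have s_gt0 : 0 < s.
  have := Sp (col_mx (1 : 'cV_1) (0 : 'cV_p)).
  rewrite col_mx_eq0 oner_eq0 /= => /(_ isT).
  rewrite /qf eS tr_col_mx trmx1 trmx0 mul_row_block !mul1mx !mul0mx !addr0.
  by rewrite mul_row_col mulmx1 mulmx0 addr0.
have s_neq0 : s != 0 by rewrite gt_eqF.
set d' := d - s^-1 *: (b *m b^T).
have d's : d'^T = d'.
  by rewrite /d' linearB /= linearZ /= trmx_mul trmxK hd.
have d'p : forall y, y != 0 -> 0 < qf d' y.
  move=> y y0; set u : 'cV_1 := - s^-1 *: (b^T *m y).
  have := Sp (col_mx u y); rewrite col_mx_eq0 negb_and y0 orbT => /(_ isT).
  have eu : u^T = - s^-1 *: (y^T *m b).
    by rewrite /u linearZ /= trmx_mul trmxK.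
  rewrite /qf eS tr_col_mx mul_row_block mul_row_col -hbc ea mul_mx_scalar eu.
  rewrite scalerA mulrN mulfV // scaleN1r addNr mul0mx add0r.
  rewrite /d' mulmxBr mulmxBl.
  suff -> : ((- s^-1 *: (y^T *m b)) *m b^T + y^T *m d) *m y =
     y^T *m d *m y - y^T *m (s^-1 *: (b *m b^T)) *m y by [].
  rewrite mulmxDl addrC -!scalemxAl -scalemxAr -scalemxAl scaleNr !mulmxA.
  by [].
have [C'' [C''u eC'']] := IH d' d's d'p.
set q := Num.sqrt s.
have q_gt0 : 0 < q by rewrite sqrtr_gt0.
have q2 : q * q = s by rewrite -expr2 sqr_sqrtr // ltW.
exists (block_mx q%:M 0 (q^-1 *: b) C''); split.
  rewrite unitmxE det_lblock det_scalar1 unitrM -!unitmxE C''u andbT.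
  by rewrite unitfE gt_eqF.
rewrite eS tr_block_mx mulmx_block !trmx0 !mulmx0 !addr0.
congr block_mx.
- by rewrite tr_scalar_mx -scalar_mxM q2 ea.
- by rewrite mul_scalar_mx linearZ /= mul0mx addr0 scalerA mulfV ?gt_eqF // scale1r hbc.
- by rewrite tr_scalar_mx mul_mx_scalar scalerA mulfV ?gt_eqF // scale1r.
rewrite -eC'' /d' linearZ /= -scalemxAl -scalemxAr scalerA -invfM q2.
by rewrite addrC subrK.
Qed.


Lemma tr_ge0 p (A : 'M[R]_p) : (forall x, 0 <= qf A x) -> 0 <= \tr A.
Proof.
move=> h; apply: sumr_ge0 => k _; have := h (delta_mx k (0 : 'I_1)).
by rewrite /qf qf_delta.
Qed.

Lemma tr_lower p (S : 'M[R]_p) : S^T = S -> (forall x, x != 0 -> 0 < qf S x) ->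
  exists c : R, 0 < c /\ forall A : 'M[R]_p, A^T = A -> (forall x, 0 <= qf A x) ->
    c * \tr A <= \tr (A *m S).
Proof.
move=> Ss Sp; have [C [Cu eS]] := chol Ss Sp.
set G := invmx C.
set K := \sum_(k < p) \sum_(j < p) \sum_(i < p) (`|G i k| * `|G j k|).
have K0 : 0 <= K by do 3!(apply: sumr_ge0 => ? _); rewrite mulr_ge0.
exists (K + 1)^-1; split; first by rewrite invr_gt0; lra.
move=> A As Ap.
set B := C^T *m A *m C.
have eT : \tr (A *m S) = \tr B.
  by rewrite eS /B mulmxA mxtrace_mulC mulmxA.
have Bs : B^T = B by rewrite /B !trmx_mul trmxK As mulmxA.
have Bp : forall x, 0 <= qf B x.
  by move=> x; have := Ap (C *m x); rewrite /qf /B trmx_mul !mulmxA.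
have eA : A = G^T *m B *m G.
  have CG : C *m G = 1%:M by rewrite /G mulmxV.
  by rewrite /B -!mulmxA CG mulmx1 mulmxA -trmx_mul CG trmx1 mul1mx.
have hB := psd_entry Bs Bp.
have trB := tr_ge0 Bp.
have : \tr A <= K * \tr B.
  rewrite {1}eA /mxtrace /K mulr_suml; apply: ler_sum => k _.
  rewrite mxE mulr_suml; apply: ler_sum => j _.
  rewrite mxE mulr_suml mulr_suml; apply: ler_sum => i _.
  rewrite mxE; apply: le_trans (ler_norm _) _; rewrite !normrM mulrAC.
  by apply: ler_wpM2l; [rewrite mulr_ge0 | exact: hB].
rewrite eT => h.
rewrite ler_pdivrMl; last lra.
nra.
Qed.


Lemma ker_inv d e (F : 'M[R]_(d, e)) : exists G : 'M[R]_(e, d),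
  forall x : 'rV[R]_d, x *m (kermx F)^T = 0 -> x = x *m F *m G.
Proof.
have kF : kermx F *m F = 0 := mulmx_ker F.
have ha : (F^T <= kermx (kermx F)^T)%MS.
  by apply/sub_kermxP; rewrite -trmx_mul kF trmx0.
have hb : (kermx (kermx F)^T <= F^T)%MS.
  rewrite -(mxrank_leqif_sup ha).2 mxrank_ker mxrank_tr mxrank_ker mxrank_tr.
  by rewrite subKn ?rank_leq_row.
set Z := (F^T :&: kermx F)%MS.
have Z0 : Z = 0.
  have /submxP [W eW] : (Z <= F^T)%MS by exact: capmxSl.
  have /sub_kermxP hZ : (Z <= kermx F)%MS by exact: capmxSr.
  apply: AAT0; rewrite {2}eW trmx_mul trmxK mulmxA hZ mul0mx //.
have hr : \rank (F^T *m F) = \rank F.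
  have := mxrank_mul_ker F^T F; rewrite -/Z Z0 mxrank0 addn0 mxrank_tr //.
have /submxP [D eD] : (F <= F^T *m F)%MS.
  by rewrite -(mxrank_leqif_sup (submxMl _ _)).2 hr.
exists D^T => x hx.
have /submxP [y ey] : (x <= F^T)%MS.
  by apply: submx_trans hb; apply/sub_kermxP.
by rewrite ey -!mulmxA; congr (_ *m _); rewrite {1}eD !trmx_mul trmxK mulmxA.
Qed.


Lemma sqE a (v : 'rV[R]_a) : (v *m v^T) 0 0 = \sum_k v 0 k ^+ 2.
Proof. by rewrite mxE; apply: eq_bigr => k _; rewrite mxE expr2. Qed.

Lemma vec_bound a b (G : 'M[R]_(a, b)) : exists C : R, 0 <= C /\
  forall w : 'rV[R]_a, ((w *m G) *m (w *m G)^T) 0 0 <= C * (w *m w^T) 0 0.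
Proof.
set c := fun k => \sum_j `|G j k|.
exists (\sum_k c k ^+ 2); split; first by apply: sumr_ge0 => k _; rewrite sqr_ge0.
move=> w; rewrite !sqE mulr_suml.
set M := Num.sqrt (\sum_k w 0 k ^+ 2).
have M0 : 0 <= M := sqrtr_ge0 _.
have hS : 0 <= \sum_k w 0 k ^+ 2 by apply: sumr_ge0 => k _; rewrite sqr_ge0.
have hw : forall j, `|w 0 j| <= M.
  move=> j; rewrite -sqrtr_sqr ler_wsqrtr //.
  by rewrite (bigD1 j) //= lerDl; apply: sumr_ge0 => k _; rewrite sqr_ge0.
apply: ler_sum => k _.
have hx : `|(w *m G) 0 k| <= M * c k.
  rewrite mxE /c mulr_sumr; apply: le_trans (ler_norm_sum _ _ _) _.
  apply: ler_sum => j _; rewrite normrM; apply: ler_wpM2r => //.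
have : (w *m G) 0 k ^+ 2 <= (M * c k) ^+ 2.
  rewrite -real_normK ?num_real //; apply: lerXn2r => //; rewrite ?nnegrE //.
  by rewrite mulr_ge0 // sumr_ge0.
by rewrite exprMn sqr_sqrtr // mulrC.
Qed.

Lemma dotvec a b (A B : 'M[R]_(a, b)) :
  (mxvec A *m (mxvec B)^T) 0 0 = \sum_i \sum_j A i j * B i j.
Proof.
rewrite mxE (reindex _ (curry_mxvec_bij _ _)) /= pair_bigA.
by apply: eq_bigr => [[i j]] _ /=; rewrite mxE !mxvecE.
Qed.

Lemma trdot a b (A B : 'M[R]_(a, b)) :
  \tr (A *m B^T) = \sum_i \sum_j A i j * B i j.
Proof.
by apply: eq_bigr => i _; rewrite mxE; apply: eq_bigr => j _; rewrite mxE.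
Qed.

Lemma sq_le (a t : R) : `|a| <= t -> a * a <= t ^+ 2.
Proof.
move=> h; have h0 := normr_ge0 a.
have -> : a * a = `|a| * `|a| by rewrite -normrM ger0_norm // -expr2 sqr_ge0.
by rewrite expr2 ler_pM.
Qed.

Lemma final_arith (B c S0 s K p lt ld tr : R) : 0 < c -> 1 <= S0 -> S0 <= s ->
  c * S0 = c + (`|B| + K + 2 * p) -> 0 <= K -> 0 <= p ->
  c * s ^+ 2 <= tr -> ld <= K + p * lt -> lt <= 2 * s -> B <= tr - ld.
Proof.
move=> c0 S01 hs hcS0 K0 p0 htr hld hlt.
have e1 : 0 <= (s - S0) * (c * s) by rewrite mulr_ge0 ?subr_ge0 // mulr_ge0 // ltW //; lra.
have e2 : 0 <= (s - 1) * (`|B| + K) by rewrite mulr_ge0 ?subr_ge0 ?addr_ge0 //; lra.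
have e3 : p * lt <= p * (2 * s) by rewrite ler_wpM2l.
have e4 : c * S0 * s = (c + (`|B| + K + 2 * p)) * s by rewrite hcS0.
have e5 : 0 <= c * s by rewrite mulr_ge0 // ?ltW //; lra.
have hB := ler_norm B.
have e6 : c * s ^+ 2 = (c * s) * s by rewrite expr2 mulrA.
nra.
Qed.

End Gen.

Section Spec.
Variable R : realType.
Variables m N n : nat.
Local Notation p1 := (m * n.+1)%N.
Local Notation p2 := (m * N)%N.
Local Notation d := (p1 * p1 + p2 * p2)%N.
Local Notation e := (p2 * p2 + (p1 * p1 + p2 * p2))%N.

Definition vecp (L : 'M[R]_p1) (T : 'M[R]_p2) : 'rV[R]_d := row_mx (mxvec L) (mxvec T).

Definition Phi (v : 'rV[R]_d) : 'rV[R]_e :=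
  row_mx (mxvec (Aop R m N n (vec_mx (lsubmx v)) (vec_mx (rsubmx v))))
    (row_mx (mxvec (vec_mx (lsubmx v) - (vec_mx (lsubmx v))^T))
            (mxvec (vec_mx (rsubmx v) - (vec_mx (rsubmx v))^T))).

Lemma addr_shuffle (V : zmodType) (x1 x2 y1 y2 z1 z2 : V) :
  x1 + x2 + (y1 + y2) - (z1 + z2) = x1 + y1 - z1 + (x2 + y2 - z2).
Proof. by rewrite (addrACA x1 x2 y1 y2) opprD (addrACA (x1 + y1)). Qed.

Lemma Aop_lin c L1 T1 L2 T2 :
  Aop R m N n (c *: L1 + L2) (c *: T1 + T2) = c *: Aop R m N n L1 T1 + Aop R m N n L2 T2.
Proof.
rewrite /Aop !mulmxDr !mulmxDl -!scalemxAr -!scalemxAl.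
by rewrite !scalerDr !scalerN addr_shuffle.
Qed.

Lemma Phi_lin : linear Phi.
Proof.
move=> c u v.
have hl : vec_mx (lsubmx (c *: u + v)) = c *: vec_mx (lsubmx u) + vec_mx (lsubmx v).
  by rewrite linearP /= linearP.
have hr : vec_mx (rsubmx (c *: u + v)) = c *: vec_mx (rsubmx u) + vec_mx (rsubmx v).
  by rewrite linearP /= linearP.
rewrite /Phi hl hr Aop_lin.
set L1 := vec_mx (lsubmx u); set L2 := vec_mx (lsubmx v).
set T1 := vec_mx (rsubmx u); set T2 := vec_mx (rsubmx v).
rewrite scale_row_mx add_row_mx scale_row_mx add_row_mx.
have hm : forall a b (X Y : 'M[R]_(a, b)), c *: mxvec X + mxvec Y = mxvec (c *: X + Y).
  by move=> *; rewrite linearP.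
have ht : forall a (X Y : 'M[R]_a), c *: X + Y - (c *: X + Y)^T = c *: (X - X^T) + (Y - Y^T).
  move=> a X Y; rewrite [(_ + _)^T]linearD /= [(_ *: _)^T]linearZ /= scalerBr opprD.
  by rewrite addrACA.
by rewrite !hm !ht.
Qed.
HB.instance Definition _ := GRing.isLinear.Build R _ _ _ Phi Phi_lin.
Definition Fm : 'M[R]_(d, e) := lin1_mx Phi.
Lemma FmE u : u *m Fm = Phi u.
Proof. exact: mul_rV_lin1. Qed.

Lemma addmx00 a b (X Y : 'M[R]_(a, b)) i j : (X + Y) i j = X i j + Y i j.
Proof. by rewrite mxE. Qed.

Lemma Phi_sym L T : L^T = L -> T^T = T ->
  Phi (vecp L T) = row_mx (mxvec (Aop R m N n L T)) 0.
Proof.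
move=> hL hT; rewrite /Phi /vecp row_mxKl row_mxKr !mxvecK hL hT !subrr.
by rewrite !linear0 row_mx0.
Qed.

Lemma Phi0 r : Phi r = 0 ->
  (vec_mx (lsubmx r))^T = vec_mx (lsubmx r) /\ (vec_mx (rsubmx r))^T = vec_mx (rsubmx r)
  /\ Aop R m N n (vec_mx (lsubmx r)) (vec_mx (rsubmx r)) = 0
  /\ r = vecp (vec_mx (lsubmx r)) (vec_mx (rsubmx r)).
Proof.
rewrite /Phi => /eqP; rewrite !row_mx_eq0 !mxvec_eq0.
move=> /andP [/eqP h1 /andP [h2 h3]].
rewrite subr_eq0 in h2; rewrite subr_eq0 in h3.
move/eqP: h2 => h2; move/eqP: h3 => h3.
rewrite /vecp !vec_mxK hsubmxK; split; first exact/esym.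
by split; [exact/esym | split].
Qed.

Lemma vecp_dot L T L' T' : L'^T = L' -> T'^T = T' ->
  (vecp L T *m (vecp L' T')^T) 0 0 = pinner R m N n L T L' T'.
Proof.
move=> hL hT; rewrite /vecp tr_row_mx mul_row_col addmx00 !dotvec.
by rewrite /pinner -[in L *m L']hL -[in T *m T']hT !trdot.
Qed.

Lemma vecp_sq L T :
  (vecp L T *m (vecp L T)^T) 0 0 = \tr (L *m L^T) + \tr (T *m T^T).
Proof. by rewrite /vecp tr_row_mx mul_row_col addmx00 !dotvec !trdot. Qed.

Lemma frob_sq (M : 'M[R]_p2) : \tr (M *m M^T) = (mxvec M *m (mxvec M)^T) 0 0.
Proof. by rewrite dotvec trdot. Qed.

Lemma tr_id (S : 'M[R]_p2) (Sig : nat -> 'M[R]_m) L T :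
  (Emx R m N n)^T *m S *m Emx R m N n = Toep R m n Sig ->
  (Umx R m N)^T *m S *m Umx R m N = S ->
  \tr (L *m Toep R m n Sig) = \tr (Aop R m N n L T *m S).
Proof.
move=> hE hU; rewrite -hE /Aop.
set E := Emx R m N n; set U := Umx R m N.
have h1 : \tr (E *m L *m E^T *m S) = \tr (L *m (E^T *m S *m E)).
  by rewrite -!mulmxA mxtrace_mulC !mulmxA.
have h2 : \tr (U *m T *m U^T *m S) = \tr (T *m S).
  by rewrite -!mulmxA mxtrace_mulC -!mulmxA (mulmxA _ S) hU.
rewrite !mulmxDl mulNmx !mxtraceD h1 h2 (raddfN mxtrace).
by rewrite addrK.
Qed.

End Spec.

Theorem lemma4 (R : realType) (m n N : nat) (hm : (1 <= m)%N) (hn : (1 <= n)%N)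
  (hN : (2 * n < N)%N) (Sig : nat -> 'M[R]_m)
  (hSig : exists SigN : 'M[R]_(m * N),
     posdef R _ SigN /\
     (Emx R m N n)^T *m SigN *m Emx R m N n = Toep R m n Sig /\
     (Umx R m N)^T *m SigN *m Umx R m N = SigN)
  (Lk : nat -> 'M[R]_(m * n.+1)) (Tk : nat -> 'M[R]_(m * N))
  (hL : forall k, Lplus R m N n (Lk k) (Tk k))
  (hdiv : (fun k => pnorm R _ _ (Lk k) (Tk k)) @ \oo --> +oo) :
  (fun k => frob R _ (Aop R m N n (Lk k) (Tk k))) @ \oo --> +oo /\
  (fun k => Jfun R m N n Sig (Lk k) (Tk k)) @ \oo --> +oo.
Proof.
have [G hG] := ker_inv (Fm R m N n).
set G1 := usubmx G.
have [C [C0 hC]] := vec_bound G1.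
have key : forall k, pnorm R _ _ (Lk k) (Tk k) <=
    Num.sqrt (C + 1) * frob R _ (Aop R m N n (Lk k) (Tk k)).
  move=> k; have [[Ls [Ts hperp]] hpd] := hL k.
  set x := vecp (Lk k) (Tk k).
  set A := Aop R m N n (Lk k) (Tk k).
  have hx : x *m (kermx (Fm R m N n))^T = 0.
    apply/rowP => i.
    have -> : (x *m (kermx (Fm R m N n))^T) 0 i =
        (x *m (row i (kermx (Fm R m N n)))^T) 0 0.
      by rewrite !mxE; apply: eq_bigr => j _; rewrite !mxE.
    set r := row i _.
    have hr : @Phi R m N n r = 0.
      by rewrite -FmE /r -row_mul mulmx_ker row0.
    have [h1 [h2 [h3 h4]]] := Phi0 hr.
    rewrite h4 vecp_dot // mxE; exact: hperp.
  have ex := hG x hx.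
  rewrite FmE Phi_sym // -[G](vsubmxK G) mul_row_col mul0mx addr0 -/G1 in ex.
  have := hC (mxvec A); rewrite -ex vecp_sq -frob_sq => hle.
  have trA : 0 <= \tr (A *m A^T).
    by rewrite trdot; do 2!(apply: sumr_ge0 => ? _); rewrite -expr2 sqr_ge0.
  rewrite /pnorm /frob -sqrtrM; last lra.
  by rewrite ler_wsqrtr //; nra.
have part1 : (fun k => frob R _ (Aop R m N n (Lk k) (Tk k))) @ \oo --> +oo.
  apply/cvgryPge => B.
  have hs : 0 < Num.sqrt (C + 1) by rewrite sqrtr_gt0; lra.
  have H := (cvgryPge _).1 hdiv (B * Num.sqrt (C + 1)).
  near=> k.
  have hk : B * Num.sqrt (C + 1) <= pnorm R _ _ (Lk k) (Tk k) by near: k; exact: H.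
  have := key k; nra.
  Unshelve. all: end_near.
split => //.
have [S [[Ssym Spd] [hE hU]]] := hSig.
have [c [c0 hc]] := tr_lower Ssym Spd.
have N0 : (0 < N)%N by apply: leq_ltn_trans hN.
have p0 : (0 < m * N)%N by rewrite muln_gt0 hm N0.
set p := (m * N)%N.
have pR : 0 < (p%:R : R) by rewrite ltr0n.
set K0 : R := (p`!)%:R.
have K01 : 1 <= K0 by rewrite /K0 ler1n fact_gt0.
have lK0 : 0 <= ln K0 := ln_ge0 K01.
apply/cvgryPge => B.
set S0 := 1 + (`|B| + ln K0 + 2 * p%:R) / c.
have S01 : 1 <= S0.
  rewrite /S0 lerDl divr_ge0 ?(ltW c0) //; have := normr_ge0 B; lra.
have hcS0 : c * S0 = c + (`|B| + ln K0 + 2 * p%:R).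
  by rewrite /S0 mulrDr mulr1 mulrCA mulfV ?gt_eqF // mulr1.
set T0 := S0 ^+ 2.
have H := (cvgryPge _).1 part1 (p%:R * T0).
near=> k.
have hk : p%:R * T0 <= frob R _ (Aop R m N n (Lk k) (Tk k)) by near: k; exact: H.
have [[Ls [Ts _]] [As Apd]] := hL k.
set A := Aop R m N n (Lk k) (Tk k).
have Apsd : forall x, 0 <= qf A x.
  move=> x; case: (eqVneq x 0) => [->|x0]; last exact/ltW/Apd.
  by rewrite /qf mulmx0 mxE.
set t := \tr A.
have t0 : 0 <= t := tr_ge0 Apsd.
have hent := psd_entry As Apsd.
have frobt : frob R _ A <= p%:R * t.
  have h : \tr (A *m A^T) <= (p%:R * t) ^+ 2.
    rewrite trdot; apply: (@le_trans _ _ (\sum_(i < p) \sum_(j < p) t ^+ 2)).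
      apply: ler_sum => i _; apply: ler_sum => j _.
      exact: sq_le.
    by rewrite !sumr_const card_ord -mulrnA -(mulr_natl (t ^+ 2)) natrM -expr2 exprMn.
  rewrite /frob -(ger0_norm (_ : 0 <= p%:R * t)) ?mulr_ge0 ?(ltW pR) //.
  by rewrite -sqrtr_sqr ler_wsqrtr.
have tT0 : T0 <= t by rewrite -(ler_pM2l pR); exact: le_trans hk frobt.
have t1 : 1 <= t by apply: le_trans tT0; rewrite /T0 expr2 mulr_ege1.
have hdet := det_bound hent.
have htr : \tr (Lk k *m Toep R m n Sig) = \tr (A *m S) := tr_id _ _ hE hU.
have hln : ln (\det A) <= ln K0 + p%:R * ln t.
  have lt0 : 0 <= ln t := ln_ge0 t1.
  case: (lerP (\det A) 1) => hd.
    by apply: le_trans (ln_le0 hd) _; rewrite addr_ge0 // mulr_ge0 // ltW.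
  have hdp : 0 < \det A by lra.
  have hK : 0 < K0 * t ^+ p by rewrite mulr_gt0 ?exprn_gt0; lra.
  have : ln (\det A) <= ln (K0 * t ^+ p).
    rewrite ler_ln ?posrE //; apply: le_trans (real_ler_norm _) hdet; exact: num_real.
  have hl : ln (K0 * t ^+ p) = ln K0 + p%:R * ln t.
    rewrite lnM ?posrE; [|lra|by rewrite exprn_gt0; lra].
    by rewrite lnXn; [rewrite -(mulr_natl (ln t) p) | lra].
  rewrite hl; lra.
have st : 0 < Num.sqrt t by rewrite sqrtr_gt0; lra.
have hlnt : ln t <= 2 * Num.sqrt t.
  have -> : t = Num.sqrt t ^+ 2 by rewrite sqr_sqrtr.
  rewrite lnXn // -mulr_natr sqrtr_sqr ger0_norm ?(ltW st) //.
  have e : 1 + (Num.sqrt t - 1) = Num.sqrt t by rewrite addrC subrK.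
  have := @le_ln1Dx R (Num.sqrt t - 1); rewrite e => /(_ ltac:(lra)).
  lra.
have hsS0 : S0 <= Num.sqrt t.
  by rewrite -(ger0_norm (_ : 0 <= S0)) ?(le_trans _ S01) // -sqrtr_sqr ler_wsqrtr.
have ht : t = Num.sqrt t ^+ 2 by rewrite sqr_sqrtr.
have hct := hc A As Apsd.
rewrite /Jfun htr; rewrite -/t ht in hct.
apply: (final_arith c0 S01 hsS0 hcS0 lK0 (ltW pR) hct hln hlnt).
Unshelve. all: end_near.
Qed.
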